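(* Let $\mathcal A_V$ be the algebra of Laurent polynomials in $a_V,b_V,c_V,d_V$ with the log-canonical Poisson bracket $\{a_V,b_V\}=a_Vb_V$, $\{a_V,c_V\}=0$, $\{a_V,d_V\}=-\tfrac12 a_Vd_V$, $\{b_V,c_V\}=0$, $\{b_V,d_V\}=-\tfrac12 b_Vd_V$, $\{c_V,d_V\}=-\tfrac12 c_Vd_V$. Let $\mathcal A_{III}$ be the algebra of Laurent polynomials in $a,b,c,d,e,f,g,h$ with the log-canonical bracket $\{a,b\}=\tfrac12 ab,\ \{a,c\}=0,\ \{a,d\}=-\tfrac14 ad,\ \{a,e\}=\tfrac14 ae,\ \{a,f\}=\tfrac14 af,\ \{a,g\}=-\tfrac14 ag,\ \{a,h\}=\tfrac14 ah,$ $\{b,c\}=0,\ \{b,d\}=-\tfrac14 bd,\ \{b,e\}=\tfrac14 be,\ \{b,f\}=-\tfrac14 bf,\ \{b,g\}=-\tfrac14 bg,\ \{b,h\}=\tfrac14 bh,$ $\{c,d\}=-\tfrac12 cd,\ \{c,e\}=\tfrac12 ce,\ \{c,f\}=\{c,g\}=\{c,h\}=0,$ $\{d,e\}=0,\ \{d,f\}=\tfrac14 df,\ \{d,g\}=\{d,h\}=0,$ $\{e,f\}=-\tfrac14 ef,\ \{e,g\}=\{e,h\}=0,\ \{f,g\}=\tfrac14 fg,\ \{f,h\}=-\tfrac14 fh,\ \{h,g\}=0$. Then the assignment $a_V\mapsto af$, $b_V\mapsto bf$, $c_V\mapsto c$, $d_V\mapsto d$ defines an injective Poisson homomorphism $\mathcal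 A_V\to\mathcal A_{III}$, realising $\mathcal A_V$ as the Poisson subalgebra of functions of $af,bf,c,d$; moreover $h$ and $g$ Poisson commute with this subalgebra.
   Context: A log-canonical bracket is extended from the generators to all Laurent polynomials by bilinearity, antisymmetry and the Leibniz rule. *)

(* Defs.v *)
From HB Require Import structures.
From mathcomp Require Import all_boot all_order all_algebra.
From mathcomp Require Import freeg.
Set Implicit Arguments. Unset Strict Implicit. Unset Printing Implicit Defensive.
Import Order.TTheory GRing.Theory Num.Theory.
Local Open Scope ring_scope.

(* Laurent polynomials in n variables x_0..x_{n-1} over R: finite formal
   R-linear combinations of monomials x^a, with exponent a in Z^n
   (a row vector of integers). *)
Notation expo n := 'rV[int]_n.
Notation LP R n := {freeg 'rV[int]_n / R}.

Definition mono (R : fieldType) (n : nat) (a : expo n) : LP R n := << a >>.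
Definition LP1 (R : fieldType) (n : nat) : LP R n := mono R (0 : expo n).
Definition gen (R : fieldType) (n : nat) (i : 'I_n) : LP R n :=
  mono R (delta_mx 0 i : expo n).

Definition LPmul (R : fieldType) (n : nat) (p q : LP R n) : LP R n :=
  \sum_(a <- dom p) \sum_(b <- dom q)
     << coeff a p * coeff b q *g (a + b) >>.

(* log-canonical bracket with structure matrix Om ({x_i,x_j} = Om i j x_i x_j),
   extended by bilinearity and Leibniz; on monomials
   {x^a, x^b} = (sum_{i,j} a_i b_j Om i j) x^(a+b). *)
Definition omega (R : fieldType) (n : nat) (Om : 'M[R]_n) (a b : expo n) : R :=
  \sum_(i < n) \sum_(j < n) ((a 0 i)%:~R * (b 0 j)%:~R * Om i j).

Definition LPbr (R : fieldType) (n : nat) (Om : 'M[R]_n) (p q : LP R n) : LP R n :=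
  \sum_(a <- dom p) \sum_(b <- dom q)
     << coeff a p * coeff b q * omega Om a b *g (a + b) >>.

Definition antisym (R : fieldType) (n : nat) (u : nat -> nat -> R) : 'M[R]_n :=
  \matrix_(i < n, j < n)
    (if (i < j)%N then u i j else if (j < i)%N then - u j i else 0).

Definition half (R : fieldType) : R := (2%:R)^-1.
Definition quarter (R : fieldType) : R := (4%:R)^-1.

(* A_V: variables a_V,b_V,c_V,d_V = x_0,x_1,x_2,x_3 *)
Definition uV (R : fieldType) (i j : nat) : R :=
  match i, j with
  | 0, 1 => 1
  | 0, 3 => - half R
  | 1, 3 => - half R
  | 2, 3 => - half R
  | _, _ => 0
  end.
Definition OmV (R : fieldType) : 'M[R]_4 := antisym 4 (uV R).

(* A_III: variables a,b,c,d,e,f,g,h = x_0,...,x_7 *)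
Definition uIII (R : fieldType) (i j : nat) : R :=
  match i, j with
  | 0, 1 => half R | 0, 3 => - quarter R | 0, 4 => quarter R
  | 0, 5 => quarter R | 0, 6 => - quarter R | 0, 7 => quarter R
  | 1, 3 => - quarter R | 1, 4 => quarter R | 1, 5 => - quarter R
  | 1, 6 => - quarter R | 1, 7 => quarter R
  | 2, 3 => - half R | 2, 4 => half R
  | 3, 5 => quarter R
  | 4, 5 => - quarter R
  | 5, 6 => quarter R | 5, 7 => - quarter R
  | _, _ => 0
  end.
Definition OmIII (R : fieldType) : 'M[R]_8 := antisym 8 (uIII R).

Definition LPhom (R : fieldType) (n m : nat) (phi : LP R n -> LP R m) : Prop :=
  [/\ forall p q, phi (p + q) = phi p + phi q,
      forall (c : R) p, phi (c *: p) = c *: phi p,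
      forall p q, phi (LPmul p q) = LPmul (phi p) (phi q)
    & phi (LP1 R n) = LP1 R m].

Definition poisson_hom (R : fieldType) (n m : nat) (On : 'M[R]_n) (Om : 'M[R]_m)
  (phi : LP R n -> LP R m) : Prop :=
  LPhom phi /\ forall p q, phi (LPbr On p q) = LPbr Om (phi p) (phi q).

Definition xV (R : fieldType) (i : 'I_4) : LP R 4 := gen R i.
Definition xIII (R : fieldType) (i : 'I_8) : LP R 8 := gen R i.

Definition assignV (R : fieldType) (phi : LP R 4 -> LP R 8) : Prop :=
  [/\ phi (xV R (inord 0)) = LPmul (xIII R (inord 0)) (xIII R (inord 5)),
      phi (xV R (inord 1)) = LPmul (xIII R (inord 1)) (xIII R (inord 5)),
      phi (xV R (inord 2)) = xIII R (inord 2)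
    & phi (xV R (inord 3)) = xIII R (inord 3)].

(* Main.v *)
Require Import Defs.
From HB Require Import structures.
From mathcomp Require Import all_boot all_order all_algebra.
From mathcomp Require Import freeg ring.
Set Implicit Arguments. Unset Strict Implicit. Unset Printing Implicit Defensive.
Import Order.TTheory GRing.Theory Num.Theory.
Local Open Scope ring_scope.

Definition F4 (a : expo 4) (k : nat) : int :=
  match k with
  | 0 => a 0 (inord 0) | 1 => a 0 (inord 1) | 2 => a 0 (inord 2)
  | 3 => a 0 (inord 3) | 5 => a 0 (inord 0) + a 0 (inord 1) | _ => 0 end.
Definition fV (a : expo 4) : expo 8 := \row_(j < 8) F4 a j.

Lemma sum_unroll (R : nmodType) n (F : 'I_n.+1 -> R) :
  \sum_(i < n.+1) F i = \sum_(0 <= k < n.+1) F (inord k).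
Proof. by rewrite big_mkord; apply: eq_bigr => i _; rewrite inord_val. Qed.

Lemma antisymE (R : fieldType) n (u : nat -> nat -> R) i j : (i <= n)%N -> (j <= n)%N ->
  antisym n.+1 u (inord i) (inord j) =
  if (i < j)%N then u i j else if (j < i)%N then - u j i else 0.
Proof. by move=> hi hj; rewrite mxE !inordK. Qed.

Lemma fVE a k : (k <= 7)%N -> fV a 0 (inord k) = F4 a k.
Proof. by move=> hk; rewrite mxE inordK. Qed.

Lemma omV (R : fieldType) (h2 : (2%:R : R) != 0) a b :
  omega (OmIII R) (fV a) (fV b) = omega (OmV R) a b.
Proof.
rewrite /omega /OmIII /OmV !sum_unroll /index_iota /= !big_cons !big_nil.
rewrite !sum_unroll /index_iota /= !big_cons !big_nil.
rewrite !fVE // !antisymE //= /Defs.half /quarter !intrD !addr0 !mulr0 !mul0r.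
have h4 : (4%:R : R) != 0 by rewrite (_ : 4 = 2 * 2)%N // natrM mulf_neq0.
by field; rewrite ?h2 ?h4.
Qed.

Lemma om7 (R : fieldType) (h2 : (2%:R : R) != 0) b :
  omega (OmIII R) (delta_mx 0 (inord 7)) (fV b) = 0.
Proof.
rewrite /omega /OmIII !sum_unroll /index_iota /= !big_cons !big_nil.
rewrite !sum_unroll /index_iota /= !big_cons !big_nil.
rewrite !fVE // !antisymE // !mxE -!val_eqE /= !inordK //=.
rewrite /Defs.half /quarter !intrD !addr0 !mulr0 !mul0r.
have h4 : (4%:R : R) != 0 by rewrite (_ : 4 = 2 * 2)%N // natrM mulf_neq0.
by field; rewrite ?h2 ?h4.
Qed.

Lemma om6 (R : fieldType) (h2 : (2%:R : R) != 0) b :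
  omega (OmIII R) (delta_mx 0 (inord 6)) (fV b) = 0.
Proof.
rewrite /omega /OmIII !sum_unroll /index_iota /= !big_cons !big_nil.
rewrite !sum_unroll /index_iota /= !big_cons !big_nil.
rewrite !fVE // !antisymE // !mxE -!val_eqE /= !inordK //=.
rewrite /Defs.half /quarter !intrD !addr0 !mulr0 !mul0r.
have h4 : (4%:R : R) != 0 by rewrite (_ : 4 = 2 * 2)%N // natrM mulf_neq0.
by field; rewrite ?h2 ?h4.
Qed.

Definition gV (c : expo 8) : expo 4 := \row_(j < 4) c 0 (inord j).

Lemma ord4_cases (j : 'I_4) : j = inord 0 \/ j = inord 1 \/ j = inord 2 \/ j = inord 3.
Proof.
case: j => [[|[|[|[|k]]]] Hk] //.
- by left; apply: val_inj; rewrite /= inordK.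
- by right; left; apply: val_inj; rewrite /= inordK.
- by right; right; left; apply: val_inj; rewrite /= inordK.
- by right; right; right; apply: val_inj; rewrite /= inordK.
Qed.

Lemma gfV a : gV (fV a) = a.
Proof.
apply/rowP => j; rewrite mxE fVE; last by apply: leq_trans (ltnW (ltn_ord j)) _.
by case: (ord4_cases j) => [->|[->|[->|->]]]; rewrite /= inordK.
Qed.

Lemma fV_inj : injective fV.
Proof. exact: can_inj gfV. Qed.

Lemma fVD a b : fV (a + b) = fV a + fV b.
Proof.
apply/rowP => k; rewrite !mxE.
case: k => [[|[|[|[|[|[|k]]]]]] Hk] /=; rewrite ?mxE ?addr0 //.
by rewrite addrACA.
Qed.

Lemma fV0 : fV 0 = 0.
Proof. by apply: (@addIr _ (fV 0)); rewrite -fVD !add0r. Qed.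

Lemma fVN a : fV (- a) = - fV a.
Proof. by apply: (@addIr _ (fV a)); rewrite -fVD !addNr fV0. Qed.

Section Alg.
Variable R : fieldType.
Local Notation LP4 := (LP R 4).
Local Notation LP8 := (LP R 8).

Definition phi0 (p : LP4) : LP8 := \sum_(a <- dom p) << coeff a p *g fV a >>.

Definition LPB n (k : expo n -> expo n -> R) (p q : LP R n) : LP R n :=
  \sum_(a <- dom p) \sum_(b <- dom q)
     << coeff a p * coeff b q * k a b *g (a + b) >>.

Lemma LPmulE n (p q : LP R n) : LPmul p q = LPB (fun _ _ => 1) p q.
Proof. by apply: eq_bigr => a _; apply: eq_bigr => b _; rewrite mulr1. Qed.

Lemma LPbrE n (Om : 'M[R]_n) p q : LPbr Om p q = LPB (omega Om) p q.
Proof. by []. Qed.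

Lemma coeff_sum n (p : LP R n) x : coeff x p = \sum_(a <- dom p) coeff a p * (a == x)%:R.
Proof.
have := congr1 (coeff x) (freeg_sumE p); rewrite raddf_sum => <-.
by apply: eq_bigr => a _; rewrite /= coeffU.
Qed.

Lemma coeff_LPB n k (p q : LP R n) c : coeff c (LPB k p q) =
  \sum_(a <- dom p) \sum_(b <- dom q) coeff a p * coeff b q * k a b * (a + b == c)%:R.
Proof.
rewrite raddf_sum; apply: eq_bigr => a _; rewrite raddf_sum /=.
by apply: eq_bigr => b _; rewrite /= coeffU.
Qed.

Lemma coeff_phi0 c p : coeff c (phi0 p) = (fV (gV c) == c)%:R * coeff (gV c) p.
Proof.
rewrite raddf_sum /=; under eq_bigr do rewrite /= coeffU.
case H: (fV (gV c) == c).
  rewrite mul1r [RHS]coeff_sum; apply: eq_bigr => a _; congr (_ * _%:R).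
  by rewrite -{1}(eqP H) (inj_eq fV_inj).
rewrite mul0r big1 // => a _.
case E: (fV a == c); last by rewrite mulr0.
by move: H; rewrite -(eqP E) gfV eqxx.
Qed.

Lemma coeff_phi0f a p : coeff (fV a) (phi0 p) = coeff a p.
Proof. by rewrite coeff_phi0 gfV eqxx mul1r. Qed.

Lemma dom_phi0 p : perm_eq (dom (phi0 p)) (map fV (dom p)).
Proof.
apply: uniq_perm; first exact: uniq_dom.
  by rewrite (map_inj_uniq fV_inj) uniq_dom.
move=> c; rewrite mem_dom coeff_phi0.
case H: (fV (gV c) == c).
  by rewrite -{2}(eqP H) (mem_map fV_inj) mem_dom mul1r.
rewrite mul0r eqxx /=; apply/esym/mapP => -[a _ E].
by move: H; rewrite E gfV eqxx.
Qed.

Lemma sum_dom_phi0 (M : nmodType) (G : expo 8 -> M) p :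
  \sum_(c <- dom (phi0 p)) G c = \sum_(a <- dom p) G (fV a).
Proof. by rewrite (perm_big _ (dom_phi0 p)) big_map. Qed.

Lemma phi0_LPB k k' (hk : forall a b, k' (fV a) (fV b) = k a b) p q :
  phi0 (LPB k p q) = LPB k' (phi0 p) (phi0 q).
Proof.
apply/eqP/freeg_eqP => c; rewrite coeff_phi0 !coeff_LPB !sum_dom_phi0.
rewrite mulr_sumr; apply: eq_bigr => a _; rewrite sum_dom_phi0 mulr_sumr; apply: eq_bigr => b _.
rewrite !coeff_phi0f hk -fVD.
have E : ((a + b == gV c)%:R * (fV (gV c) == c)%:R : R) = (fV (a + b) == c)%:R.
  have B : ((a + b == gV c) && (fV (gV c) == c)) = (fV (a + b) == c).
    apply/andP/eqP.
      by case=> /eqP -> /eqP.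
    by move=> <-; rewrite gfV eqxx.
  by rewrite -natrM mulnb B.
by rewrite mulrC -!mulrA E.
Qed.

Lemma phi0_mono a : phi0 (mono R a) = mono R (fV a).
Proof. by rewrite /phi0 /mono domU1 big_seq1 coeffU eqxx mulr1. Qed.

Lemma mono_mul n (a b : expo n) : LPmul (mono R a) (mono R b) = mono R (a + b).
Proof. by rewrite /LPmul /mono !domU1 !big_seq1 !coeffU !eqxx !mulr1n !mulr1. Qed.

Lemma mono_inv n (x : expo n) q : LPmul (mono R x) q = mono R 0 -> q = mono R (- x).
Proof.
move=> H; apply/eqP/freeg_eqP => c.
rewrite [RHS]coeffU mul1r.
have := congr1 (coeff (c + x)) H.
rewrite LPmulE coeff_LPB /mono domU1 big_seq1 !coeffU eqxx !mul1r.
have -> : (0 == c + x) = (- x == c) by rewrite eq_sym addr_eq0 eq_sym.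
move=> <-; rewrite [LHS]coeff_sum; apply: eq_bigr => b _.
rewrite mulr1n mulr1 mul1r; congr (_ * _%:R).
by rewrite [x + b]addrC (can_eq (addrK x)).
Qed.

Lemma scale_mono n k (a : expo n) : << k *g a >> = k *: mono R a.
Proof. by apply/eqP/freeg_eqP => c; rewrite coeffZ !coeffU mul1r. Qed.

Lemma phi0_hom : LPhom phi0.
Proof.
split.
- by move=> p q; apply/eqP/freeg_eqP => c; rewrite coeffD !coeff_phi0 coeffD mulrDr.
- by move=> k p; apply/eqP/freeg_eqP => c; rewrite coeffZ !coeff_phi0 coeffZ mulrCA.
- by move=> p q; rewrite !LPmulE; apply: phi0_LPB.
- by rewrite /LP1 phi0_mono fV0.
Qed.

Lemma delta_fV0 : fV (delta_mx 0 (inord 0)) = delta_mx 0 (inord 0) + delta_mx 0 (inord 5).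
Proof.
apply/rowP => k; rewrite !mxE.
case: k => [[|[|[|[|[|[|[|[|k]]]]]]]] Hk] //=;
  rewrite ?mxE -?val_eqE /= ?inordK //.
Qed.

Lemma delta_fV1 : fV (delta_mx 0 (inord 1)) = delta_mx 0 (inord 1) + delta_mx 0 (inord 5).
Proof.
apply/rowP => k; rewrite !mxE.
case: k => [[|[|[|[|[|[|[|[|k]]]]]]]] Hk] //=;
  rewrite ?mxE -?val_eqE /= ?inordK //.
Qed.

Lemma delta_fV2 : fV (delta_mx 0 (inord 2)) = delta_mx 0 (inord 2).
Proof.
apply/rowP => k; rewrite !mxE.
case: k => [[|[|[|[|[|[|[|[|k]]]]]]]] Hk] //=;
  rewrite ?mxE -?val_eqE /= ?inordK //.
Qed.

Lemma delta_fV3 : fV (delta_mx 0 (inord 3)) = delta_mx 0 (inord 3).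
Proof.
apply/rowP => k; rewrite !mxE.
case: k => [[|[|[|[|[|[|[|[|k]]]]]]]] Hk] //=;
  rewrite ?mxE -?val_eqE /= ?inordK //.
Qed.

Lemma phi0_assign : assignV phi0.
Proof.
rewrite /assignV /xV /xIII /gen ?phi0_mono !mono_mul.
by rewrite delta_fV0 delta_fV1 delta_fV2 delta_fV3; split.
Qed.

Lemma phi_eq (phi : LP4 -> LP8) : LPhom phi -> assignV phi -> forall p, phi p = phi0 p.
Proof.
move=> [phiD phiZ phiM phi1] [h0 h1 h2 h3].
pose S a := phi (mono R a) = mono R (fV a).
have S0 : S 0 by rewrite /S fV0; exact: phi1.
have SD : forall a b, S a -> S b -> S (a + b).
  by move=> a b Ha Hb; rewrite /S -mono_mul phiM Ha Hb mono_mul fVD.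
have SN : forall a, S a -> S (- a).
  move=> a Ha; rewrite /S fVN; apply: mono_inv.
  by rewrite -Ha -phiM mono_mul addrN S0 fV0.
have Sg : forall j : 'I_4, S (delta_mx 0 j).
  move=> j; rewrite /S; case: (ord4_cases j) => [->|[->|[->|->]]].
  - by move: h0; rewrite /xV /xIII /gen mono_mul -delta_fV0.
  - by move: h1; rewrite /xV /xIII /gen mono_mul -delta_fV1.
  - by move: h2; rewrite /xV /xIII /gen -delta_fV2.
  - by move: h3; rewrite /xV /xIII /gen -delta_fV3.
have SZ : forall (z : int) a, S a -> S (z *: a).
  move=> z a Ha; case: z => n.
    elim: n => [|n IH]; first by rewrite scale0r.
    by rewrite intS scalerDl scale1r; apply: SD.
  rewrite NegzE scaleNr; apply: SN.
  elim: n => [|n IH]; first by rewrite scale1r.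
  by rewrite intS scalerDl scale1r; apply: SD.
have Sall : forall a, S a.
  move=> a; rewrite (matrix_sum_delta a).
  apply: (big_ind S) => // i _; apply: (big_ind S) => // j _.
  by rewrite ord1; apply: SZ.
have phi00 : phi 0 = 0 by rewrite -(scale0r 0) phiZ !scale0r.
move=> p; rewrite -[in LHS](freeg_sumE p) (big_morph phi phiD phi00).
apply: eq_bigr => a _; rewrite !scale_mono phiZ.
by have := Sall a; rewrite /S => ->.
Qed.

End Alg.

Theorem mainTheorem6 (R : fieldType) (hR : [pchar R] =i pred0) :
  (exists phi : LP R 4 -> LP R 8, LPhom phi /\ assignV phi) /\
  (forall phi : LP R 4 -> LP R 8, LPhom phi -> assignV phi ->
     [/\ injective phi,
         poisson_hom (OmV R) (OmIII R) phi,
         (forall p q, exists r, phi r = LPbr (OmIII R) (phi p) (phi q)),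
         (forall p, LPbr (OmIII R) (xIII R (inord 7)) (phi p) = 0)
       & (forall p, LPbr (OmIII R) (xIII R (inord 6)) (phi p) = 0)]).
Proof.
have h2 : (2%:R : R) != 0.
  apply/negP => H2; have := hR 2; rewrite !inE /= H2; by [].

split.
  by exists (@phi0 R); split; [exact: phi0_hom | exact: phi0_assign].
move=> phi Hh Ha; have E := phi_eq Hh Ha.
have Hbr : forall p q, phi0 (LPbr (OmV R) p q) = LPbr (OmIII R) (phi0 p) (phi0 q).
  by move=> p q; exact: (phi0_LPB (fun a b => omV h2 a b)).
split.
- move=> p q H; apply/eqP/freeg_eqP => b.
  by rewrite -!(coeff_phi0f b) -!E H.
- by split=> // p q; rewrite !E.
- by move=> p q; exists (LPbr (OmV R) p q); rewrite !E.
- move=> p; rewrite E; apply/eqP/freeg_eqP => c.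
  rewrite coeff0 LPbrE coeff_LPB /xIII /gen /mono domU1 big_seq1 sum_dom_phi0 big1 // => b _.
  by rewrite om7 // mulr0 mul0r.
- move=> p; rewrite E; apply/eqP/freeg_eqP => c.
  rewrite coeff0 LPbrE coeff_LPB /xIII /gen /mono domU1 big_seq1 sum_dom_phi0 big1 // => b _.
  by rewrite om6 // mulr0 mul0r.
Qed.
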